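(* $s_{\mathbf A_R}=s_\Gamma$.
   Context: Let $\mathbf A_R=\{A_1,A_2,A_3\}$ with $A_1=\begin{pmatrix}1&1&1\\0&1&0\\0&0&1\end{pmatrix}$, $A_2=\begin{pmatrix}1&0&0\\1&1&1\\0&0&1\end{pmatrix}$, $A_3=\begin{pmatrix}1&0&0\\0&1&0\\1&1&1\end{pmatrix}$, and $\Gamma=\{A_i^nA_j: i\ne j\in\{1,2,3\},\ n\ge1\}$. For singular values $\alpha_1\ge\alpha_2\ge\alpha_3$ and $s\ge0$: $\phi^s(A)=(\alpha_2/\alpha_1)^s$ for $0\le s\le1$; $\frac{\alpha_2}{\alpha_1}(\frac{\alpha_3}{\alpha_1})^{s-1}$ for $1\le s\le2$; $(\frac{\alpha_2\alpha_3}{\alpha_1^2})^s$ for $s\ge2$. For a finite or countable set $\mathbf A$ of matrices, $\zeta_{\mathbf A}(s)=\sum_{n\ge1}\sum\phi^s(B_1\cdots B_n)$ over all words $(B_1,\dots,B_n)\in\mathbf A^n$, and $s_{\mathbf A}=\inf\{s\ge0:\zeta_{\mathbf A}(s)<\infty\}$. *)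

(* Defs.v *)
From HB Require Import structures.
From mathcomp Require Import all_boot all_order all_algebra.
From mathcomp Require Import all_classical all_reals all_analysis.
Set Implicit Arguments. Unset Strict Implicit. Unset Printing Implicit Defensive.
Import Order.TTheory GRing.Theory Num.Theory.
Local Open Scope classical_set_scope.
Local Open Scope ring_scope.

Section Defs.
Variable R : realType.

(* A_R = {A_1, A_2, A_3}; indices 0,1,2 stand for 1,2,3.
   A_k has ones on the diagonal and in the whole row k, zeros elsewhere:
   A_1 = [1 1 1; 0 1 0; 0 0 1], A_2 = [1 0 0; 1 1 1; 0 0 1],
   A_3 = [1 0 0; 0 1 0; 1 1 1]. *)
Definition Amat (k : 'I_3) : 'M[R]_3 :=
  \matrix_(i < 3, j < 3) ((i == j) || (i == k))%:R.

Definition A_R : set 'M[R]_3 := [set B | exists k : 'I_3, B = Amat k].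

Definition Gamma : set 'M[R]_3 :=
  [set B | exists (i j : 'I_3) (n : nat),
     i != j /\ (1 <= n)%N /\ B = Amat i ^+ n *m Amat j].

(* (a1, a2, a3) are the singular values of A, in decreasing order:
   a1 >= a2 >= a3 >= 0 and a1^2, a2^2, a3^2 are the eigenvalues (with
   multiplicity) of A^T A, i.e. the roots of its characteristic polynomial. *)
Definition is_svals (A : 'M[R]_3) (a : R * R * R) : Prop :=
  let: (a1, a2, a3) := a in
  [/\ 0 <= a3, a3 <= a2, a2 <= a1 &
   char_poly (A^T *m A) =
     ('X - (a1 ^+ 2)%:P) * ('X - (a2 ^+ 2)%:P) * ('X - (a3 ^+ 2)%:P)].

Definition svals (A : 'M[R]_3) : R * R * R := xget (0, 0, 0) (is_svals A).

Definition phi (s : R) (A : 'M[R]_3) : R :=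
  let: (a1, a2, a3) := svals A in
  if s <= 1 then (a2 / a1) `^ s
  else if s <= 2 then (a2 / a1) * (a3 / a1) `^ (s - 1)
  else (a2 * a3 / a1 ^+ 2) `^ s.

Definition words (S : set 'M[R]_3) : set (seq 'M[R]_3) :=
  [set w | w != [::] /\ forall B, B \in w -> S B].

Definition zeta (S : set 'M[R]_3) (s : R) : \bar R :=
  (\esum_(w in words S) (phi s (\prod_(B <- w) B))%:E)%E.

Definition crit_exp (S : set 'M[R]_3) : \bar R :=
  ereal_inf [set s%:E | s in [set s : R | 0 <= s /\ (zeta S s < +oo)%E]].

End Defs.

(* Main.v *)
Require Import Defs.
From HB Require Import structures.
From mathcomp Require Import all_boot all_order all_algebra.
From mathcomp Require Import all_classical all_reals all_analysis.
From mathcomp Require Import ring lra zify.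
From mathcomp Require complex.
Set Implicit Arguments. Unset Strict Implicit. Unset Printing Implicit Defensive.
Import Order.TTheory GRing.Theory Num.Theory.
Local Open Scope classical_set_scope.
Local Open Scope ring_scope.

Definition ee (T : Type) (A : 'M[T]_3) (i j : nat) : T := A (inord i) (inord j).
Arguments ee {T}.
Lemma mxe (T : Type) (A : 'M[T]_3) (i j : 'I_3) : A i j = ee A i j.
Proof. by rewrite /ee !inord_val. Qed.

Lemma det3 (T : comNzRingType) (A : 'M[T]_3) :
  \det A = A 0 0 * A 1 1 * A 2 2 - A 0 0 * A 1 2 * A 2 1
         - A 0 1 * A 1 0 * A 2 2 + A 0 1 * A 1 2 * A 2 0
         + A 0 2 * A 1 0 * A 2 1 - A 0 2 * A 1 1 * A 2 0.
Proof.
rewrite (expand_det_row _ 0) !big_ord_recl big_ord0 /cofactor.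
rewrite !(expand_det_row _ 0) !big_ord_recl !big_ord0 /cofactor.
by rewrite !det_mx11 !mxE !mxe /= /bump /=; ring.
Qed.

Section CP.
Variable R : comNzRingType.
Definition c2 (M : 'M[R]_3) := M 0 0 * M 1 1 - M 0 1 * M 1 0 + M 0 0 * M 2 2
   - M 0 2 * M 2 0 + M 1 1 * M 2 2 - M 1 2 * M 2 1.

Definition cpe (M : 'M[R]_3) x :=
  x * x * x - (M 0 0 + M 1 1 + M 2 2) * (x * x) + c2 M * x - \det M.
Lemma cp_eval (M : 'M[R]_3) x : (char_poly M).[x] = cpe M x.
Proof.
rewrite /char_poly (@det3 _ (char_poly_mx M)) /char_poly_mx !mxE /= !hornerE /cpe det3 /c2 !mxe; ring. Qed.
End CP.


Lemma cp_rel (F : realFieldType) (M : 'M[F]_3) p q r :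
  char_poly M = ('X - p%:P) * ('X - q%:P) * ('X - r%:P) ->
  [/\ p + q + r = M 0 0 + M 1 1 + M 2 2, p * q + p * r + q * r = c2 M
    & p * q * r = \det M].
Proof.
move=> E.
have H x : cpe M x = (x - p) * (x - q) * (x - r).
  by rewrite -cp_eval E !hornerE.
have H0 := H 0; have H1 := H 1; have H2 := H (-1).
rewrite /cpe in H0 H1 H2.
split.
- lra.
- lra.
- lra.
Qed.

Section Fro.
Variable R : comNzRingType.
Definition fro (X : 'M[R]_3) := \sum_(i < 3) \sum_(j < 3) X i j ^+ 2.

Lemma fro_tr (X : 'M[R]_3) : let M := X^T *m X in M 0 0 + M 1 1 + M 2 2 = fro X.
Proof.
rewrite /fro !mxE !big_ord_recl !big_ord0 !mxE !mxe /= /bump /=; ring.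
Qed.

Lemma fro_adj (X : 'M[R]_3) : c2 (X^T *m X) = fro (\adj X).
Proof.
rewrite /fro /c2 !mxE !big_ord_recl !big_ord0 !mxE /cofactor.
rewrite !(expand_det_row _ 0) !big_ord_recl !big_ord0 /cofactor !det_mx11 !mxE !mxe /= /bump /=; ring.
Qed.
End Fro.

Module SymSplit.
Import complex.

Section Ex.
Variable R : rcfType.

Lemma char_poly_similar (C : fieldType) n (P D : 'M[C]_n) : P \in unitmx ->
  char_poly (invmx P *m D *m P) = char_poly D.
Proof.
move=> Pu.
rewrite /char_poly /char_poly_mx.
pose Q := map_mx (@polyC C) P; pose Qi := map_mx (@polyC C) (invmx P).
have QiQ : Qi *m Q = 1%:M by rewrite -map_mxM mulVmx // map_mx1.
have -> : 'X%:M - map_mx (@polyC C) (invmx P *m D *m P) =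
   Qi *m ('X%:M - map_mx (@polyC C) D) *m Q.
  by rewrite !map_mxM mulmxBr mulmxBl mul_mx_scalar -scalemxAl QiQ scalemx1.
rewrite !det_mulmx mulrC mulrA -det_mulmx.
by rewrite [Q *m Qi](_ : _ = 1%:M) ?det1 ?mul1r // -map_mxM mulmxV // map_mx1.
Qed.

Lemma sym_split (M : 'M[R]_3) : M^T = M ->
  exists p q r : R, char_poly M = ('X - p%:P) * ('X - q%:P) * ('X - r%:P).
Proof.
move=> MT.
pose f := real_complex R.
pose Mc := map_mx f M.
have Mh : Mc \is hermsymmx.
  apply: realsym_hermsym.
    apply/is_hermitianmxP; rewrite expr0 scale1r; apply/matrixP => i j; rewrite !mxE /=; by rewrite -[in LHS]MT mxE.
  by apply/mxOverP => i j; rewrite mxE; apply/complex_realP; exists (M i j).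
have /orthomx_spectralP Meq := hermitian_normalmx Mh.
have dreal := hermitian_spectral_diag_real Mh.
set P := spectralmx Mc in Meq.
set d := spectral_diag Mc in Meq dreal.
have Pu : P \in unitmx by apply: spectral_unit.
have hc : char_poly Mc = \prod_(i < 3) ('X - (d 0 i)%:P).
  by rewrite Meq char_poly_similar // char_poly_trig ?diag_mx_is_trig //;
    apply: eq_bigr => i _; rewrite mxE eqxx.
have dr : forall i, exists x : R, d 0 i = f x.
  by move=> i; apply/complex_realP; exact: (mxOverP dreal).
have [x0 e0] := dr 0; have [x1 e1] := dr (lift ord0 ord0); have [x2 e2] := dr (lift ord0 (lift ord0 ord0)).
exists x0, x1, x2.
apply: (@map_poly_inj _ _ f).
rewrite map_char_poly -/Mc hc !big_ord_recl big_ord0 mulr1.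
rewrite !rmorphM !rmorphB /= !map_polyX !map_polyC /=.
by rewrite e0 e1 e2 mulrA.
Qed.
End Ex.
End SymSplit.

Lemma sort3 (F : realDomainType) (p q r : F) : 0 <= p -> 0 <= q -> 0 <= r ->
  exists p' q' r', [/\ q' <= p', r' <= q', 0 <= r' &
   ('X - p%:P) * ('X - q%:P) * ('X - r%:P) = ('X - p'%:P) * ('X - q'%:P) * ('X - r'%:P)].
Proof.
move=> p0 q0 r0.
have [pq|qp] := leP p q; have [qr|rq] := leP q r; have [pr|rp] := leP p r.
- by exists r, q, p; split; [lra|lra|lra|ring].
- by exists r, q, p; split; [lra|lra|lra|ring].
- by exists q, r, p; split; [lra|lra|lra|ring].
- by exists q, p, r; split; [lra|lra|lra|ring].
- by exists r, p, q; split; [lra|lra|lra|ring].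
- by exists p, r, q; split; [lra|lra|lra|ring].
- by exists p, q, r; split; [lra|lra|lra|ring].
- by exists p, q, r; split; [lra|lra|lra|ring].
Qed.

Lemma root_le (F : realFieldType) (x y k : F) : 1 <= k -> 0 <= x -> 0 <= y -> x * x <= k * (y * y) -> x <= k * y.
Proof.
move=> k1 x0 y0 h; case: (leP x (k * y)) => // hlt; exfalso.
have ky : 0 <= k * y by rewrite mulr_ge0 // (le_trans ler01).
have : (k * y) * (k * y) < x * x by apply: ltr_pM.
have : k * (y * y) <= (k * y) * (k * y).
  have -> : (k * y) * (k * y) = k * (k * (y * y)) by ring.
  have yy : 0 <= y * y by rewrite mulr_ge0.
  have k0 : 0 <= k by rewrite (le_trans ler01).
  apply: ler_wpM2l => //; rewrite ler_peMl //.
lra.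
Qed.

Lemma top_bounds (F : realFieldType) (a1 a2 a3 : F) : 0 < a3 -> a3 <= a2 -> a2 <= a1 ->
  a1 * a1 <= a1 * a1 + a2 * a2 + a3 * a3 <= 3 * (a1 * a1) /\
  a1 * a1 * (a2 * a2) <= a1 * a1 * (a2 * a2) + a1 * a1 * (a3 * a3) + a2 * a2 * (a3 * a3)
     <= 3 * (a1 * a1 * (a2 * a2)).
Proof.
move=> a30 a32 a21.
have a20 : 0 < a2 by exact: lt_le_trans a32.
have a10 : 0 < a1 by exact: lt_le_trans a21.
have s32 : a3 * a3 <= a2 * a2 by apply: ler_pM => //; apply: ltW.
have s21 : a2 * a2 <= a1 * a1 by apply: ler_pM => //; apply: ltW.
have q1 : 0 < a1 * a1 by rewrite mulr_gt0.
have q2 : 0 < a2 * a2 by rewrite mulr_gt0.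
have q3 : 0 < a3 * a3 by rewrite mulr_gt0.
have t1 : a1 * a1 * (a3 * a3) <= a1 * a1 * (a2 * a2) by rewrite ler_pM2l.
have t2 : a2 * a2 * (a3 * a3) <= a1 * a1 * (a2 * a2) by rewrite [X in _ <= X]mulrC ler_pM2l // (le_trans s32 s21).
have t3 : 0 < a1 * a1 * (a3 * a3) by rewrite mulr_gt0.
have t4 : 0 < a2 * a2 * (a3 * a3) by rewrite mulr_gt0.
split; apply/andP; split; lra.
Qed.

Lemma div_le (F : realFieldType) (p q r s k : F) : 0 < q -> 0 < s ->
  p * s <= k * (r * q) -> p / q <= k * (r / s).
Proof.
move=> q0 s0 h.
rewrite mulrA ler_pdivrMr // mulrAC ler_pdivlMr //.
by rewrite -mulrA.
Qed.

Definition kk (F : realFieldType) : F := 19683.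

Lemma kk1 (F : realFieldType) : 1 <= kk F.
Proof. by rewrite /kk ler1n. Qed.

Lemma ratio_bounds (F : realFieldType) (a1 a2 a3 b1 b2 b3 : F) :
  0 < a3 -> a3 <= a2 -> a2 <= a1 -> 0 < b3 -> b3 <= b2 -> b2 <= b1 ->
  a1 * a2 * a3 = 1 -> b1 * b2 * b3 = 1 ->
  b1 * b1 + b2 * b2 + b3 * b3 <= 9 * (a1 * a1 + a2 * a2 + a3 * a3) ->
  a1 * a1 * (a2 * a2) + a1 * a1 * (a3 * a3) + a2 * a2 * (a3 * a3) <=
    9 * (b1 * b1 * (b2 * b2) + b1 * b1 * (b3 * b3) + b2 * b2 * (b3 * b3)) ->
  b1 * b1 * (b2 * b2) + b1 * b1 * (b3 * b3) + b2 * b2 * (b3 * b3) <=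
    9 * (a1 * a1 * (a2 * a2) + a1 * a1 * (a3 * a3) + a2 * a2 * (a3 * a3)) ->
  [/\ a2 / a1 <= kk F * (b2 / b1), a3 / a1 <= kk F * (b3 / b1)
    & a2 * a3 / (a1 * a1) <= kk F * (b2 * b3 / (b1 * b1))].
Proof.
move=> a30 a32 a21 b30 b32 b21 pa pb hF hG hG'.
have [/andP[fa1 fa2] /andP[ga1 ga2]] := top_bounds a30 a32 a21.
have [/andP[fb1 fb2] /andP[gb1 gb2]] := top_bounds b30 b32 b21.
have a20 : 0 < a2 by exact: lt_le_trans a32.
have a10 : 0 < a1 by exact: lt_le_trans a21.
have b20 : 0 < b2 by exact: lt_le_trans b32.
have b10 : 0 < b1 by exact: lt_le_trans b21.
set A := a1 * a1 in fa1 fa2 ga1 ga2 hF hG hG' *; set B := a2 * a2 in fa1 fa2 ga1 ga2 hF hG hG' *.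
set Ab := b1 * b1 in fb1 fb2 gb1 gb2 hF hG hG' *; set Bb := b2 * b2 in fb1 fb2 gb1 gb2 hF hG hG' *.
have A0 : 0 < A by rewrite mulr_gt0. have Ab0 : 0 < Ab by rewrite mulr_gt0.
have B0 : 0 < B by rewrite mulr_gt0. have Bb0 : 0 < Bb by rewrite mulr_gt0.
have Q1 : Ab <= 27 * A by lra.
have Q2 : A * B <= 27 * (Ab * Bb) by lra.
have Q3 : Ab * Bb <= 27 * (A * B) by lra.
have k1 := kk1 F.
split.
- apply: div_le => //; apply: root_le; [exact: k1 | by rewrite mulr_ge0 // ltW | by rewrite mulr_ge0 // ltW |].
  have h1 : Ab * Ab <= (27 * A) * (27 * A).
    by apply: ler_pM => //; exact: ltW.
  have h2 : (A * B) * (Ab * Ab) <= (27 * (Ab * Bb)) * ((27 * A) * (27 * A)).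
    by apply: ler_pM => //; rewrite mulr_ge0 // ltW.
  have e : a2 * b1 * (a2 * b1) = B * Ab by rewrite /B /Ab; ring.
  have e' : b2 * a1 * (b2 * a1) = Bb * A by rewrite /Bb /A; ring.
  rewrite e e' /kk.
  have AAb : 0 < A * Ab by rewrite mulr_gt0.
  rewrite -(ler_pM2l AAb).
  have -> : A * Ab * (B * Ab) = (A * B) * (Ab * Ab) by ring.
  apply: (le_trans h2).
  suff -> : A * Ab * (19683 * (Bb * A)) = 27 * (Ab * Bb) * (27 * A * (27 * A)) by [].
  ring.
- apply: div_le => //; apply: root_le; [exact: k1 | by rewrite mulr_ge0 // ltW | by rewrite mulr_ge0 // ltW |].
  pose D := (a1 * a2) * (a1 * a2) * ((b1 * b2) * (b1 * b2)).
  have D0 : 0 < D by rewrite /D !mulr_gt0.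
  have ex : a3 * b1 * (a3 * b1) * D = (a1 * a2 * a3) * (a1 * a2 * a3) * (Ab * (Ab * Bb)).
    by rewrite /D /Ab /Bb; ring.
  have ey : b3 * a1 * (b3 * a1) * D = (b1 * b2 * b3) * (b1 * b2 * b3) * (A * (A * B)).
    by rewrite /D /A /B; ring.
  rewrite pa !mul1r in ex; rewrite pb !mul1r in ey.
  rewrite -(ler_pM2r D0) -[X in _ <= X]mulrA ey ex.
  have h : Ab * (Ab * Bb) <= (27 * A) * (27 * (A * B)).
    by apply: ler_pM => //; rewrite ?mulr_ge0 // ltW.
  have : 0 <= A * (A * B) by rewrite !mulr_ge0 // ltW.
  rewrite /kk; lra.
- apply: div_le; [by rewrite mulr_gt0 | by rewrite mulr_gt0 |].
  apply: root_le; [exact: k1 | by rewrite !mulr_ge0 // ltW | by rewrite !mulr_ge0 // ltW |].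
  pose D := A * Ab.
  have D0 : 0 < D by rewrite /D !mulr_gt0.
  have ex : a2 * a3 * Ab * (a2 * a3 * Ab) * D = (a1 * a2 * a3) * (a1 * a2 * a3) * (Ab * (Ab * Ab)).
    by rewrite /D /Ab /A; ring.
  have ey : b2 * b3 * A * (b2 * b3 * A) * D = (b1 * b2 * b3) * (b1 * b2 * b3) * (A * (A * A)).
    by rewrite /D /A /Ab; ring.
  rewrite pa !mul1r in ex; rewrite pb !mul1r in ey.
  rewrite -(ler_pM2r D0) -[X in _ <= X]mulrA ey ex.
  have h : Ab * (Ab * Ab) <= (27 * A) * ((27 * A) * (27 * A)).
    have Ab0' : 0 <= Ab by exact: ltW.
    have h1 : Ab * Ab <= (27 * A) * (27 * A) by apply: ler_pM.
    by apply: ler_pM => //; rewrite mulr_ge0.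
  have : 0 <= A * (A * A) by rewrite !mulr_ge0 // ltW.
  rewrite /kk; lra.
Qed.

Section Svals.
Variable R : realType.

Lemma fro_ge0 (X : 'M[R]_3) : 0 <= fro X.
Proof. by apply: sumr_ge0 => i _; apply: sumr_ge0 => j _; apply: sqr_ge0. Qed.

Lemma svals_ex (X : 'M[R]_3) : exists t, is_svals X t.
Proof.
set M := X^T *m X.
have MT : M^T = M by rewrite /M trmx_mul trmxK.
have [p [q [r E]]] := SymSplit.sym_split MT.
have [h1 h2 h3] := cp_rel E.
rewrite fro_tr in h1; rewrite fro_adj in h2.
rewrite /M det_mulmx det_tr in h3.
have e1 := fro_ge0 X; have e2 := fro_ge0 (\adj X).
have e3 : 0 <= \det X * \det X by rewrite -expr2 sqr_ge0.
have root x : x = p \/ x = q \/ x = r -> x * x * x - fro X * (x * x) + fro (\adj X) * x - \det X * \det X = 0.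
  by rewrite -h1 -h2 -h3 => -[->|[->|->]]; ring.
have pos x : x = p \/ x = q \/ x = r -> 0 <= x.
  move=> hx; have := root x hx; case: (leP 0 x) => // x0 rt; exfalso.
  have : 0 <= fro X * (x * x) by rewrite mulr_ge0 // -expr2 sqr_ge0.
  have : fro (\adj X) * x <= 0 by rewrite mulr_ge0_le0 // ltW.
  have : x * x * x < 0 by (have : 0 < x * x by nra); nra.
  lra.
have [p' [q' [r' [le1 le2 le3 E']]]] := sort3 (pos p (or_introl erefl))
  (pos q (or_intror (or_introl erefl))) (pos r (or_intror (or_intror erefl))).
exists (Num.sqrt p', Num.sqrt q', Num.sqrt r').
have q0 : 0 <= q' by lra.
have p0 : 0 <= p' by lra.
split.
- exact: sqrtr_ge0.
- by rewrite ler_sqrt.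
- by rewrite ler_sqrt.
- by rewrite !sqr_sqrtr // -/M E.
Qed.

Lemma svals_spec (X : 'M[R]_3) : is_svals X (svals X).
Proof. by apply: xgetPex; apply: svals_ex. Qed.

End Svals.

Section Phi.
Variable R : realType.

Lemma svals_rel (X : 'M[R]_3) : \det X = 1 ->
  let: (a1, a2, a3) := svals X in
  [/\ 0 < a3, a3 <= a2 <= a1, a1 * a2 * a3 = 1,
      a1 * a1 + a2 * a2 + a3 * a3 = fro X &
      a1 * a1 * (a2 * a2) + a1 * a1 * (a3 * a3) + a2 * a2 * (a3 * a3) = fro (\adj X)].
Proof.
move=> dX.
have := svals_spec X; case: (svals X) => [[a1 a2] a3] [h3 h32 h21 E].
have [c1 c2 c3] := cp_rel E.
rewrite fro_tr in c1; rewrite fro_adj in c2.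
rewrite det_mulmx det_tr dX mulr1 in c3.
have t0 : 0 <= a1 * a2 * a3 by rewrite !mulr_ge0 // (le_trans h3) // (le_trans h32).
have t1 : a1 * a2 * a3 = 1.
  have : (a1 * a2 * a3) * (a1 * a2 * a3) = 1 by rewrite -c3 !expr2; ring.
  nra.
have a30 : 0 < a3.
  rewrite lt_neqAle h3 andbT; apply/negP => /eqP a3e.
  by move: t1; rewrite -a3e mulr0 => /eqP; rewrite eq_sym oner_eq0.
split => //; rewrite -?c1 -?c2 ?h32 ?h21 ?expr2 //.
Qed.

End Phi.

Section Phi2.
Variable R : realType.
Lemma phi_cmp (s : R) (X Y : 'M[R]_3) : 0 <= s -> \det X = 1 -> \det Y = 1 ->
  fro Y <= 9 * fro X -> fro (\adj X) <= 9 * fro (\adj Y) ->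
  fro (\adj Y) <= 9 * fro (\adj X) ->
  phi s X <= (kk R * kk R `^ s) * phi s Y.
Proof.
move=> s0 dX dY hF hG hG'.
have := svals_rel dX; have := svals_rel dY; rewrite /phi.
case: (svals X) => [[a1 a2] a3]; case: (svals Y) => [[b1 b2] b3].
move=> [b30 /andP[b32 b21] pb fb gb] [a30 /andP[a32 a21] pa fa ga].
rewrite -fa -fb in hF; rewrite -ga -gb in hG hG'.
have [r1 r2 r3] := ratio_bounds a30 a32 a21 b30 b32 b21 pa pb hF hG hG'.
move: (kk R) (kk1 R) r1 r2 r3 => k k1 r1 r2 r3.
have k0 : 0 <= k by rewrite (le_trans ler01).
have a20 : 0 < a2 by exact: lt_le_trans a32.
have a10 : 0 < a1 by exact: lt_le_trans a21.
have b20 : 0 < b2 by exact: lt_le_trans b32.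
have b10 : 0 < b1 by exact: lt_le_trans b21.
have u0 : 0 <= a2 / a1 by rewrite divr_ge0 // ltW.
have u0' : 0 <= b2 / b1 by rewrite divr_ge0 // ltW.
have v0 : 0 <= a3 / a1 by rewrite divr_ge0 // ltW.
have v0' : 0 <= b3 / b1 by rewrite divr_ge0 // ltW.
have w0 : 0 <= a2 * a3 / a1 ^+ 2 by rewrite divr_ge0 // ?mulr_ge0 // ltW.
have w0' : 0 <= b2 * b3 / b1 ^+ 2 by rewrite divr_ge0 // ?mulr_ge0 // ltW.
have kks : k `^ s <= k * k `^ s by rewrite ler_peMl // powR_ge0.
have mono (r x y : R) : 0 <= r -> 0 <= x -> 0 <= y -> x <= y -> x `^ r <= y `^ r.
  by move=> r0 x0 y0 xy; apply: ge0_ler_powR; rewrite ?nnegrE.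
case: ifP => s1.
  apply: (le_trans (mono s _ _ s0 u0 (mulr_ge0 k0 u0') r1)).
  rewrite (powRM _ k0 u0'); apply: ler_wpM2r => //; exact: powR_ge0.
case: ifP => s2.
  have s10 : 0 <= s - 1 by rewrite subr_ge0 ltW // ltNge s1.
  have hv := mono (s - 1) _ _ s10 v0 (mulr_ge0 k0 v0') r2.
  rewrite (powRM _ k0 v0') in hv.
  have kk' : k `^ (s - 1) <= k `^ s by apply: ler_powR => //; rewrite lerBlDr lerDl.
  apply: (le_trans (ler_pM u0 (powR_ge0 _ _) r1 hv)).
  set U := b2 / b1; set V := (b3 / b1) `^ (s - 1); set P := k `^ (s - 1); set Q := k `^ s.
  have -> : k * U * (P * V) = k * P * (U * V) by ring.
  apply: ler_wpM2r; first by rewrite mulr_ge0 // powR_ge0.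
  exact: ler_wpM2l.
rewrite expr2 in w0 w0' *.
apply: (le_trans (mono s _ _ s0 w0 (mulr_ge0 k0 w0') r3)).
rewrite (powRM _ k0 w0'); apply: ler_wpM2r => //; exact: powR_ge0.
Qed.
End Phi2.

Section Amat.
Variable R : realType.
Local Notation A := (@Amat R).

Lemma AmatE (k i j : 'I_3) : A k i j = ((i == j) || (i == k))%:R.
Proof. by rewrite /Amat mxE. Qed.

Lemma det_Amat k : \det (A k) = 1.
Proof.
rewrite det3 !AmatE.
by case: k => [[|[|[|//]]] ?] /=; lra.
Qed.

Definition Ainv (k : 'I_3) : 'M[R]_3 := 2%:M - A k.

Lemma A_Ainv k : A k *m Ainv k = 1%:M.
Proof.
apply/matrixP => i j; rewrite /Ainv !mxE !big_ord_recl big_ord0 !mxE ?AmatE.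
by case: k => [[|[|[|//]]] ?]; case: i => [[|[|[|//]]] ?]; case: j => [[|[|[|//]]] ?] /=; lra.
Qed.

Lemma Ainv_bound k i j : Ainv k i j ^+ 2 <= 1.
Proof.
rewrite /Ainv !mxE ?AmatE.
by case: k => [[|[|[|//]]] ?]; case: i => [[|[|[|//]]] ?]; case: j => [[|[|[|//]]] ?] /=; lra.
Qed.

Lemma A_bound k i j : A k i j ^+ 2 <= 1.
Proof.
rewrite AmatE.
by case: k => [[|[|[|//]]] ?]; case: i => [[|[|[|//]]] ?]; case: j => [[|[|[|//]]] ?] /=; lra.
Qed.

Lemma sq3 (t : 'I_3 -> R) : (\sum_k t k) ^+ 2 <= 3 * \sum_k t k ^+ 2.
Proof.
rewrite !big_ord_recl !big_ord0 !addr0.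
set a := t _; set b := t _; set c := t _.
have := sqr_ge0 (a - b); have := sqr_ge0 (b - c); have := sqr_ge0 (a - c).
rewrite !expr2; lra.
Qed.

Lemma fro_mulr (X C : 'M[R]_3) : (forall i j, C i j ^+ 2 <= 1) ->
  fro (X *m C) <= 9 * fro X.
Proof.
move=> hC; rewrite /fro.
apply: (@le_trans _ _ (\sum_(i < 3) \sum_(j < 3) 3 * \sum_(k < 3) X i k ^+ 2)).
  apply: ler_sum => i _; apply: ler_sum => j _; rewrite mxE.
  apply: (le_trans (sq3 _)); apply: ler_wpM2l => //.
  apply: ler_sum => k _; rewrite exprMn -[X in _ <= X]mulr1.
  by apply: ler_wpM2l => //; apply: sqr_ge0.
rewrite mulr_sumr; apply: ler_sum => i _.
rewrite sumr_const card_ord -mulr_natr.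
set S := \sum_(k < 3) _; lra.
Qed.


Lemma fro_mull (X C : 'M[R]_3) : (forall i j, C i j ^+ 2 <= 1) ->
  fro (C *m X) <= 9 * fro X.
Proof.
move=> hC; rewrite /fro.
apply: (@le_trans _ _ (\sum_(i < 3) \sum_(j < 3) 3 * \sum_(k < 3) X k j ^+ 2)).
  apply: ler_sum => i _; apply: ler_sum => j _; rewrite mxE.
  apply: (le_trans (sq3 _)); apply: ler_wpM2l => //.
  apply: ler_sum => k _; rewrite exprMn -[X in _ <= X]mul1r.
  by apply: ler_wpM2r => //; apply: sqr_ge0.
rewrite [X in _ <= 9 * X]exchange_big /=.
rewrite sumr_const card_ord -mulr_natr -mulr_sumr.
set S := \sum_(j < 3) _; lra.
Qed.

Lemma adj_inv (X : 'M[R]_3) : \det X = 1 -> \adj X = invmx X.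
Proof. by move=> dX; rewrite /invmx unitmxE dX unitr1 invr1 scale1r. Qed.

Lemma inv_uniq (M N : 'M[R]_3) : M \in unitmx -> M *m N = 1%:M -> invmx M = N.
Proof. by move=> uM MN; rewrite -[N](mulKmx uM) MN mulmx1. Qed.

Lemma step_bounds (X : 'M[R]_3) k : \det X = 1 ->
  [/\ \det (X *m A k) = 1, fro (X *m A k) <= 9 * fro X,
      fro (\adj X) <= 9 * fro (\adj (X *m A k)) &
      fro (\adj (X *m A k)) <= 9 * fro (\adj X)].
Proof.
move=> dX; set Y := X *m A k.
have dY : \det Y = 1 by rewrite det_mulmx dX det_Amat mulr1.
have uX : X \in unitmx by rewrite unitmxE dX unitr1.
have uY : Y \in unitmx by rewrite unitmxE dY unitr1.
have iY : invmx Y = Ainv k *m invmx X.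
  apply: inv_uniq => //.
  by rewrite /Y !mulmxA -[X *m _ *m _]mulmxA A_Ainv mulmx1 mulmxV.
have iX : invmx X = A k *m invmx Y by rewrite iY mulmxA A_Ainv mul1mx.
rewrite !adj_inv //; split => //.
- exact/fro_mulr/A_bound.
- by rewrite {1}iX; apply/fro_mull/A_bound.
- by rewrite iY; apply/fro_mull/Ainv_bound.
Qed.


Definition wv (i j : 'I_3) (n : nat) : 'cV[R]_3 :=
  \col_a ((1 + 2 * (a == j) + 4 * n * (a == i))%N%:R).

Definition one3 : 'cV[R]_3 := const_mx 1.

Lemma A_wv i j n : i != j -> A i *m wv i j n = wv i j n.+1.
Proof.
move=> ij; apply/matrixP => a b; rewrite !mxE !big_ord_recl big_ord0 !mxE.
move: ij; case: i => [[|[|[|//]]] ?]; case: j => [[|[|[|//]]] ?] //;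
  case: a => [[|[|[|//]]] ?] _ /=;
  rewrite ?mul1r ?mul0r ?add0r ?addr0 -?natrD; congr (_%:R); lia.
Qed.

Lemma A_one i j : i != j -> A j *m one3 = wv i j 0.
Proof.
move=> ij; apply/matrixP => a b; rewrite !mxE !big_ord_recl big_ord0 !mxE.
move: ij; case: i => [[|[|[|//]]] ?]; case: j => [[|[|[|//]]] ?] //;
  case: a => [[|[|[|//]]] ?] _ /=;
  rewrite ?natrD ?natrM ?mulr0n ?mulr1n; lra.
Qed.

Lemma Gamma_rs i j n : i != j -> (A i ^+ n *m A j) *m one3 = wv i j n.
Proof.
move=> ij; rewrite -mulmxA (A_one ij).
elim: n => [|n IH]; first by rewrite expr0 mul1mx.
by rewrite exprS -mulmxE -mulmxA IH A_wv.
Qed.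

Lemma wv_inj i j k l n m : i != j -> k != l -> (0 < n)%N ->
  wv i j n = wv k l m -> [/\ i = k, j = l & n = m].
Proof.
move=> ij kl n0 E.
have H a : (1 + 2 * (a == j) + 4 * n * (a == i) = 1 + 2 * (a == l) + 4 * m * (a == k))%N.
  by move/matrixP: E => /(_ a 0); rewrite !mxE => /eqP; rewrite eqr_nat => /eqP.
have Hi := H i; rewrite eqxx (negbTE ij) in Hi.
have ik : i = k.
  apply/eqP; move: Hi; case: (i == k) => //; case: (i == l) => /=; lia.
subst k.
have Hj := H j; rewrite eqxx eq_sym (negbTE ij) in Hj.
rewrite (negbTE kl) in Hi.
have jl : j = l by apply/eqP; move: Hj; case: (j == l) => //=; lia.
split => //; lia.
Qed.

Lemma Gamma_uniq i j n k l m : i != j -> k != l -> (0 < n)%N ->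
  A i ^+ n *m A j = A k ^+ m *m A l -> [/\ i = k, j = l & n = m].
Proof.
move=> ij kl n0 E; apply: wv_inj => //.
by rewrite -(Gamma_rs _ ij) -(Gamma_rs _ kl) E.
Qed.

Lemma Amat_inj : injective A.
Proof.
move=> i k E; apply/eqP; apply/negPn/negP => ik.
move/matrixP: E => /(_ i k); rewrite !AmatE eqxx orbT (negbTE ik) /= => /eqP.
by rewrite eqr_nat.
Qed.
End Amat.

Section Words.
Variable R : realType.
Local Notation A := (@Amat R).
Local Notation M3 := 'M[R]_3.

Definition gam (t : 'I_3 * 'I_3 * nat) : M3 := A t.1.1 ^+ t.2 *m A t.1.2.
Definition isG (t : 'I_3 * 'I_3 * nat) := t.1.1 != t.1.2 /\ (0 < t.2)%N.
Definition dec (B : M3) : 'I_3 * 'I_3 * nat :=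
  xget (ord0, ord0, 0%N) (fun t => isG t /\ B = gam t).
Definition expand (t : 'I_3 * 'I_3 * nat) : seq M3 := nseq t.2 (A t.1.1) ++ [:: A t.1.2].
Definition gee (B : M3) : seq M3 := expand (dec B).
Definition flat (u : seq M3) : seq M3 := flatten (map gee u).
Definition allG (u : seq M3) := forall B, B \in u -> Gamma B.

Lemma GammaP B : Gamma B <-> exists t, isG t /\ B = gam t.
Proof.
split.
  by move=> [i [j [n [ij [n0 ->]]]]]; exists (i, j, n).
by move=> [[[i j] n] [[/= ij n0] ->]]; exists i, j, n.
Qed.

Lemma dec_spec B : Gamma B -> isG (dec B) /\ B = gam (dec B).
Proof. by move/GammaP => ex; apply: (xgetPex _ ex). Qed.

Lemma dec_gam t : isG t -> dec (gam t) = t.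
Proof.
move=> Gt; have [[ij n0] E] := dec_spec (proj2 (GammaP _) (ex_intro _ t (conj Gt erefl))).
move: Gt ij n0 E; case: t => [[i j] n] [/= ij n0].
case: (dec _) => [[k l] m] /= kl m0 E.
by have [-> -> ->] := Gamma_uniq ij kl n0 E.
Qed.

Lemma ee_gam t : isG t -> gee (gam t) = expand t.
Proof. by move=> Gt; rewrite /gee dec_gam. Qed.

Lemma prod_nseq n (a : M3) : \prod_(C <- nseq n a) C = a ^+ n.
Proof.
elim: n => [|n IH]; first by rewrite big_nil expr0.
by rewrite /= big_cons IH exprS.
Qed.

Lemma prod_expand t : \prod_(C <- expand t) C = gam t.
Proof.
case: t => [[i j] n]; rewrite /expand /gam /= big_cat big_cons big_nil prod_nseq /=.
by rewrite mulr1 mulmxE.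
Qed.

Lemma prod_ee B : Gamma B -> \prod_(C <- gee B) C = B.
Proof. by move/dec_spec => [_ E]; rewrite /gee prod_expand -E. Qed.

Lemma prod_flat u : allG u -> \prod_(C <- flat u) C = \prod_(B <- u) B.
Proof.
move=> hu; rewrite /flat big_flatten big_map; apply: eq_big_seq => B Bu.
exact/prod_ee/hu.
Qed.

Lemma flat_rcons u B : flat (rcons u B) = flat u ++ gee B.
Proof. by rewrite /flat map_rcons flatten_rcons. Qed.

Lemma parse (a b c : M3) n m s t : b != a -> c != a ->
  nseq n a ++ b :: s = nseq m a ++ c :: t -> [/\ n = m, b = c & s = t].
Proof.
move=> ba ca; elim: n m => [|n IH] [|m] /=.
- by case=> -> ->.
- by case=> E; rewrite E eqxx in ba.
- by case=> E; rewrite E eqxx in ca.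
- by case=> /IH [-> -> ->].
Qed.

Lemma ee_inj B C s t : Gamma B -> Gamma C -> gee B ++ s = gee C ++ t -> B = C /\ s = t.
Proof.
move=> /dec_spec [GB EB] /dec_spec [GC EC]; rewrite /gee.
move: GB GC EB EC; case: (dec B) => [[i j] n]; case: (dec C) => [[k l] m].
move=> [/= ij n0] [/= kl m0] -> ->; rewrite /expand /= -!catA /=.
case: n n0 => [//|n] _; case: m m0 => [//|m] _ /= [ik].
have ik' := Amat_inj ik; subst k.
have ja : A j != A i by apply/eqP => /Amat_inj /eqP; rewrite eq_sym (negbTE ij).
have la : A l != A i by apply/eqP => /Amat_inj /eqP; rewrite eq_sym (negbTE kl).
have := @parse (A i) (A j) (A l) n m s t ja la.
by move=> h /h [-> /Amat_inj -> ->].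
Qed.


Lemma ee_nil B : Gamma B -> gee B != [::].
Proof. by move/dec_spec => _; rewrite /gee /expand; case: (dec B) => [[i j] n] /=; case: n. Qed.

Lemma flat_inj u v : allG u -> allG v -> flat u = flat v -> u = v.
Proof.
elim: u v => [|B u IH] [|C v] //= hu hv.
- move=> E; have := ee_nil (hv C (mem_head _ _)).
  by rewrite /flat /= in E; case: (gee C) E.
- move=> E; have := ee_nil (hu B (mem_head _ _)).
  by rewrite /flat /= in E; case: (gee B) E.
- rewrite /flat /= => E0.
  have [-> E] := ee_inj (hu B (mem_head _ _)) (hv C (mem_head _ _)) E0.
  congr (_ :: _); apply: IH => // [D Du|D Dv].
    by apply: hu; rewrite in_cons Du orbT.
  by apply: hv; rewrite in_cons Dv orbT.
Qed.

Lemma flat_A u : allG u -> forall B, B \in flat u -> A_R B.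
Proof.
move=> hu B /flattenP [s /mapP [C Cu ->]].
have := dec_spec (hu C Cu); rewrite /gee /expand; case: (dec C) => [[i j] n] _.
rewrite mem_cat mem_nseq inE => /orP [/andP [_ /eqP ->]|/eqP ->].
  by exists i.
by exists j.
Qed.

Lemma decomp w : (forall B, B \in w -> A_R B) ->
  exists u k m, allG u /\ w = flat u ++ nseq m (A k).
Proof.
elim/last_ind: w => [_|w x IH hw].
  by exists [::], ord0, 0%N; split.
have [u [k [m [hu E]]]] : exists u k m, allG u /\ w = flat u ++ nseq m (A k).
  by apply: IH => B Bw; apply: hw; rewrite mem_rcons in_cons Bw orbT.
have [l El] : A_R x by apply: hw; rewrite mem_rcons mem_head.
subst x w; clear IH hw.
case: m => [|m].
  by exists u, l, 1%N; split => //; rewrite cats0 -cats1.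
have [<-|lk] := eqVneq l k.
  exists u, l, m.+2; split => //; rewrite rcons_cat; congr (_ ++ _).
  by elim: (m.+1) => //= p ->.
exists (rcons u (gam (k, l, m.+1))), k, 0%N; split.
  move=> B; rewrite mem_rcons in_cons => /orP [/eqP ->|/hu //].
  by apply/GammaP; exists (k, l, m.+1); split => //; split => //=; rewrite eq_sym.
rewrite flat_rcons ee_gam /=; last by split => //=; rewrite eq_sym.
by rewrite cats0 /expand /= rcons_cat /= cats1.
Qed.

End Words.

Section Main.
Variable R : realType.
Local Notation A := (@Amat R).
Local Notation M3 := 'M[R]_3.

Lemma phi_ge0 s (X : M3) : 0 <= phi s X.
Proof.
have := svals_spec X; rewrite /phi; case: (svals X) => [[a1 a2] a3] [a30 a32 a21 _].
have a20 : 0 <= a2 by exact: le_trans a32.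
have a10 : 0 <= a1 by exact: le_trans a21.
case: ifP => _; first exact: powR_ge0.
case: ifP => _; last exact: powR_ge0.
by rewrite mulr_ge0 ?divr_ge0 // powR_ge0.
Qed.

Definition allA (w : seq M3) := forall B, B \in w -> A_R B.

Lemma det_prodA w : allA w -> \det (\prod_(B <- w) B) = 1.
Proof.
elim: w => [|B w IH] hw; first by rewrite big_nil det1.
rewrite big_cons -mulmxE det_mulmx IH; last first.
  by move=> C Cw; apply: hw; rewrite in_cons Cw orbT.
have [k ->] := hw B (mem_head _ _).
by rewrite det_Amat mul1r.
Qed.

Definition KK (s : R) := kk R * kk R `^ s.

Lemma phi_step s w l : 0 <= s -> allA w ->
  phi s (\prod_(B <- w) B) <= KK s * phi s (\prod_(B <- w) B *m A l).
Proof.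
move=> s0 hw; have dX := det_prodA hw.
have [dY hF hG hG'] := step_bounds l dX.
exact: phi_cmp.
Qed.

Definition cnext (B : M3) : M3 := if B == A 0 then A 1 else A 0.

Lemma cnext_A k : exists l, l != k /\ cnext (A k) = A l.
Proof.
rewrite /cnext; case: eqP => [/Amat_inj ->|Ak].
  by exists 1; split.
exists 0; split => //; apply/eqP => k0; by apply: Ak; rewrite k0.
Qed.


Lemma esum_sub (T : choiceType) (S1 S2 : set T) (g : T -> \bar R) :
  S1 `<=` S2 -> (forall x, S2 x -> (0 <= g x)%E) ->
  (\esum_(x in S1) g x <= \esum_(x in S2) g x)%E.
Proof.
move=> sub g0; rewrite (esumID S1 S2) // (setIidr sub); apply: leeDl.
by apply: esum_ge0 => x [/g0].
Qed.

Lemma esum_natmul (T : choiceType) (S : set T) (g : T -> R) n :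
  (forall x, S x -> 0 <= g x) -> (\esum_(x in S) (g x)%:E < +oo)%E ->
  (\esum_(x in S) (n%:R * g x)%:E < +oo)%E.
Proof.
move=> g0 fin; elim: n => [|n IH].
  by rewrite esum1 // => x _; rewrite mul0r.
rewrite (eq_esum (b := fun x => (g x)%:E + (n%:R * g x)%:E)%E); last first.
  by move=> x _; rewrite mulrS mulrDl mul1r EFinD.
rewrite esumD; first exact: lte_add_pinfty.
  by move=> x /g0; rewrite lee_fin.
by move=> x /g0 gx; rewrite lee_fin mulr_ge0.
Qed.


Local Notation GW := (words (@Gamma R)).
Local Notation AW := (words (@A_R R)).
Local Notation img := (@flat R @` GW).

Lemma GW_allG u : GW u -> allG u.
Proof. by case. Qed.

Lemma flat_set_inj : set_inj GW (@flat R).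
Proof. by move=> u v; rewrite !inE => Gu Gv; apply: flat_inj; apply: GW_allG. Qed.

Lemma zetaG_img s : zeta (@Gamma R) s =
  (\esum_(w in img) (phi s (\prod_(B <- w) B))%:E)%E.
Proof.
have -> := esum_image GW (@flat R) (fun w => (phi s (\prod_(B <- w) B))%:E) flat_set_inj.
by apply: eq_esum => u Gu; rewrite prod_flat //; apply: GW_allG.
Qed.

Lemma img_sub : img `<=` AW.
Proof.
move=> _ [u [un0 hu] <-]; split; last exact: flat_A.
case: u un0 hu => [//|B u] _ hu.
rewrite /flat /=; have := ee_nil (hu B (mem_head _ _)); by case: (gee B).
Qed.

Lemma zetaG_le s : (zeta (@Gamma R) s <= zeta (@A_R R) s)%E.
Proof.
rewrite zetaG_img /zeta; apply: esum_sub; first exact: img_sub.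
by move=> x _; rewrite lee_fin phi_ge0.
Qed.


Definition gnext (w : seq M3) : seq M3 := rcons w (cnext (last 1 w)).

Lemma last_nseqS (x a : M3) m : last x (nseq m.+1 a) = a.
Proof. by elim: m x => //= m IH x; rewrite IH. Qed.

Lemma gnext_img w : AW w -> ~ img w -> img (gnext w).
Proof.
move=> [wn0 hw] nimg; have [u [k [m [hu E]]]] := decomp hw.
case: m E => [|m] E.
  exfalso; apply: nimg; rewrite cats0 in E; exists u => //; split => //.
  by apply: contra wn0; rewrite E => /eqP ->.
have lw : last 1 w = A k by rewrite E last_cat last_nseqS.
have [l [lk El]] := cnext_A k.
exists (rcons u (@gam R (k, l, m.+1))).
  split; first by case: u {hu E}.
  move=> B; rewrite mem_rcons in_cons => /orP [/eqP ->|/hu //].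
  by apply/GammaP; exists (k, l, m.+1); split => //; split => //=; rewrite eq_sym.
rewrite flat_rcons ee_gam /gnext ?lw ?El; last by split => //=; rewrite eq_sym.
by rewrite E rcons_cat /= -cats1.
Qed.

Lemma gnext_inj (D : set (seq M3)) : set_inj D gnext.
Proof. by move=> u v _ _ /rcons_inj [->]. Qed.

Lemma KK_ge0 s : 0 <= KK s.
Proof. by rewrite /KK mulr_ge0 ?powR_ge0 // (le_trans ler01) // kk1. Qed.

Lemma zetaA_le s : 0 <= s -> (zeta (@A_R R) s <= zeta (@Gamma R) s +
  \esum_(w in img) (KK s * phi s (\prod_(B <- w) B))%:E)%E.
Proof.
move=> s0; rewrite zetaG_img /zeta (esumID img AW); last first.
  by move=> x _; rewrite lee_fin phi_ge0.
apply: leeD.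
  apply: esum_sub; first by move=> x [].
  by move=> x _; rewrite lee_fin phi_ge0.
apply: (@le_trans _ _ (\esum_(w in AW `&` ~` img)
   (KK s * phi s (\prod_(B <- gnext w) B))%:E)%E).
  apply: le_esum => w [[_ hw] _]; rewrite lee_fin /gnext big_rcons /=.
  rewrite /cnext; case: ifP => _; rewrite -mulmxE; exact: phi_step.
have <- := esum_image (AW `&` ~` img) gnext
   (fun w => (KK s * phi s (\prod_(B <- w) B))%:E) (@gnext_inj _).
apply: esum_sub.
  by move=> _ [w [Aw nw] <-]; apply: gnext_img.
by move=> x _; rewrite lee_fin mulr_ge0 ?KK_ge0 ?phi_ge0.
Qed.

End Main.

Theorem lemma6p7 (R : realType) : crit_exp (@A_R R) = crit_exp (@Gamma R).
Proof.
have E : [set s : R | 0 <= s /\ (zeta (@A_R R) s < +oo)%E] =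
         [set s : R | 0 <= s /\ (zeta (@Gamma R) s < +oo)%E].
  apply/seteqP; split => s [s0 h]; split => //.
    exact: le_lt_trans (zetaG_le s) h.
  apply: le_lt_trans (zetaA_le s0) _; apply: lte_add_pinfty => //.
  have [N hN] : exists N : nat, KK s <= N%:R.
    by exists (Num.bound (KK s)); apply/ltW/archi_boundP/KK_ge0.
  apply: le_lt_trans (@esum_natmul _ _ _ (fun w => phi s (\prod_(B <- w) B)) N _ _).
  - apply: le_esum => w _; rewrite lee_fin; apply: ler_wpM2r => //; exact: phi_ge0.
  - by move=> w _; exact: phi_ge0.
  - by rewrite -zetaG_img.
by rewrite /crit_exp E.
Qed.
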